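(* Let $(\pi_1,S_1,T_1,W_1)$ be a linearly minimal homomorphism dilation system of a linear system $(\varphi,\mathcal A,V)$, and let $(\pi_c,S_c,T_c,W_c)$ be the canonical dilation. (i) If $\ker S_1$ contains no nonzero $\pi_1(\mathcal A)$-invariant subspace, then $(\pi_1,S_1,T_1,W_1)$ is equivalent to the canonical dilation. (ii) If $\dim W_1<\infty$ and $\pi_1$ is equivalent to $\pi_c$, in the sense that there is a bijective linear map $R:W_1\to W_c$ with $\pi_c(a)R=R\pi_1(a)$ for all $a\in\mathcal A$, then $\ker S_1$ contains no nonzero $\pi_1(\mathcal A)$-invariant subspace.
   Context: Fix a field $\mathbb F$; all algebras and vector spaces are over $\mathbb F$, and $L(X)$ is the algebra of linear maps $X\to X$. A linear system $(\varphi,\mathcal A,V)$: $\mathcal A$ a unital associative algebra with unit $I$, $V$ a vector space, $\varphi:\mathcal A\to L(V)$ linear with $\varphi(I)=\mathrm{id}_V$. A homomorphism dilation system $(\pi,S,T,W)$: $W$ a vector space, $\pi:\mathcal A\to L(W)$ a unital homomorphism, $T:V\to W$ injective linear, $S:W\to V$ surjective linear, $\varphi(a)=S\pi(a)T$ for all $a$. It is linearly minimal if $W=\mathrm{span}\{\pi(a)Tv\}$. Two linearly minimal systems are equivalent if there is a bijective linear $R:W_1\to W_2$ with $RT_1=T_2$, $S_2R=S_1$, $\pi_1(a)=R^{-1}\pi_2(a)R$ for all $a$. Canonical dilation: $\alpha_{a,x}\in L(\mathcal A,V)$, $\alpha_{a,x}(b)=\varphi(ba)x$; $W_c=\mathrm{span}\{\alpha_{a,x}:a\in\mathcal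 A,x\in V\}$; $\pi_c(a)\alpha_{b,x}=\alpha_{ab,x}$; $T_cx=\alpha_{I,x}$; $S_c(\alpha_{a,x})=\varphi(a)x$. *)

(* Defs.v *)
From HB Require Import structures.
From mathcomp Require Import all_boot all_order all_algebra.
Set Implicit Arguments. Unset Strict Implicit. Unset Printing Implicit Defensive.
Import GRing.Theory.
Local Open Scope ring_scope.

Section Defs.
Variable F : fieldType.

Definition in_span (W : lmodType F) (P : W -> Prop) (w : W) : Prop :=
  exists n (c : 'I_n -> F) (u : 'I_n -> W),
    (forall i, P (u i)) /\ w = \sum_(i < n) c i *: u i.

Definition is_subspace (W : lmodType F) (U : W -> Prop) : Prop :=
  U 0 /\ forall (c : F) u v, U u -> U v -> U (c *: u + v).

Definition finite_dim (W : lmodType F) : Prop :=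
  exists n (u : 'I_n -> W), forall w, in_span (fun x => exists i, x = u i) w.

Definition linear_system (A : algType F) (V : lmodType F) (phi : A -> V -> V)
  : Prop :=
  [/\ (forall a, linear (phi a)),
      (forall (c : F) (a b : A) (x : V), phi (c *: a + b) x = c *: phi a x + phi b x)
    & (forall x, phi 1 x = x)].

Definition hom_dilation (A : algType F) (V W : lmodType F) (phi : A -> V -> V)
  (pi : A -> W -> W) (S : W -> V) (T : V -> W) : Prop :=
  [/\
      (forall a, linear (pi a)),
      (forall (c : F) (a b : A) (w : W), pi (c *: a + b) w = c *: pi a w + pi b w),
      (forall w, pi 1 w = w)
    & (forall (a b : A) (w : W), pi (a * b) w = pi a (pi b w))] /\
  [/\
      (linear T /\ injective T),
      (linear S /\ (forall v, exists w, S w = v))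
    & (forall a x, phi a x = S (pi a (T x)))].

Definition lin_minimal (A : algType F) (V W : lmodType F)
  (pi : A -> W -> W) (T : V -> W) : Prop :=
  forall w : W, in_span (fun u => exists a x, u = pi a (T x)) w.

Definition no_invariant_in_ker (A : algType F) (V W : lmodType F)
  (pi : A -> W -> W) (S : W -> V) : Prop :=
  forall U : W -> Prop, is_subspace U ->
    (forall a u, U u -> U (pi a u)) ->
    (forall u, U u -> S u = 0) ->
    forall u, U u -> u = 0.

(* ---- canonical dilation, inside L(A,V) represented as functions A -> V ---- *)

Definition alpha (A : algType F) (V : lmodType F) (phi : A -> V -> V)
  (a : A) (x : V) : A -> V := fun b => phi (b * a) x.

Definition in_Wc (A : algType F) (V : lmodType F) (phi : A -> V -> V)
  (f : A -> V) : Prop :=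
  exists n (c : 'I_n -> F) (a : 'I_n -> A) (x : 'I_n -> V),
    f = fun b => \sum_(i < n) c i *: alpha phi (a i) (x i) b.

(* pi_c(a) alpha_{b,x} = alpha_{ab,x}; on all of W_c this is f |-> (b |-> f (b a)) *)
Definition pi_c (A : algType F) (V : lmodType F) (a : A) (f : A -> V) : A -> V :=
  fun b => f (b * a).

Definition T_c (A : algType F) (V : lmodType F) (phi : A -> V -> V) (x : V)
  : A -> V := alpha phi 1 x.

(* S_c(alpha_{a,x}) = phi(a) x = alpha_{a,x}(I); on W_c this is f |-> f I *)
Definition S_c (A : algType F) (V : lmodType F) (f : A -> V) : V := f 1.

Definition lin_bij_onto_Wc (A : algType F) (V W : lmodType F)
  (phi : A -> V -> V) (R : W -> A -> V) : Prop :=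
  [/\ (forall (c : F) (u v : W), R (c *: u + v) = fun b => c *: R u b + R v b),
      (forall w, in_Wc phi (R w)),
      (forall f, in_Wc phi f -> exists w, R w = f)
    & injective R].

Definition equiv_to_canonical (A : algType F) (V W : lmodType F)
  (phi : A -> V -> V) (pi : A -> W -> W) (S : W -> V) (T : V -> W) : Prop :=
  exists R : W -> A -> V,
    [/\ lin_bij_onto_Wc phi R,
        (forall x, R (T x) = T_c phi x),
        (forall w, S_c (R w) = S w)
      & (forall a w, R (pi a w) = pi_c a (R w))].

Definition rep_equiv_to_canonical (A : algType F) (V W : lmodType F)
  (phi : A -> V -> V) (pi : A -> W -> W) : Prop :=
  exists R : W -> A -> V,
    lin_bij_onto_Wc phi R /\ (forall a w, pi_c a (R w) = R (pi a w)).

End Defs.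

(* Main.v *)
Require Import Defs.
From HB Require Import structures.
From mathcomp Require Import all_boot all_order all_algebra.
Set Implicit Arguments. Unset Strict Implicit. Unset Printing Implicit Defensive.
Import GRing.Theory.
Local Open Scope ring_scope.
From Stdlib Require Import FunctionalExtensionality IndefiniteDescription.

Lemma f0 (F : fieldType) (U W : lmodType F) (f : U -> W) :
  (forall c u v, f (c *: u + v) = c *: f u + f v) -> f 0 = 0.
Proof.
move=> Hf; have := Hf 1 0 0; rewrite scale1r addr0 scale1r => H.
by apply: (addrI (f 0)); rewrite addr0 -H.
Qed.

Lemma fsum (F : fieldType) (U W : lmodType F) (f : U -> W) n (c : 'I_n -> F) (u : 'I_n -> U) :
  (forall c u v, f (c *: u + v) = c *: f u + f v) ->
  f (\sum_(i < n) c i *: u i) = \sum_(i < n) c i *: f (u i).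
Proof.
move=> Hf; elim/big_rec2: _ => [|i y1 y2 _ <-]; first exact: f0.
by rewrite Hf.
Qed.

Lemma fsub (F : fieldType) (U W : lmodType F) (f : U -> W) u v :
  (forall c u v, f (c *: u + v) = c *: f u + f v) -> f (u - v) = f u - f v.
Proof.
move=> Hf; have := Hf (-1) v u; rewrite !scaleN1r addrC => ->; by rewrite addrC.
Qed.

Definition Lc (F : fieldType) (W : lmodType F) n (u : 'I_n -> W) (d : 'rV[F]_n) : W :=
  \sum_(i < n) d 0 i *: u i.

Lemma Lc_lin (F : fieldType) (W : lmodType F) n (u : 'I_n -> W) c x y :
  Lc u (c *: x + y) = c *: Lc u x + Lc u y.
Proof.
rewrite /Lc scaler_sumr -big_split /=; apply: eq_bigr => i _.
by rewrite !mxE scalerDl scalerA.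
Qed.

Lemma span_coord (F : fieldType) (W : lmodType F) n (u : 'I_n -> W) w :
  in_span (fun x => exists i, x = u i) w -> exists d, w = Lc u d.
Proof.
case=> m [c [v [Hv ->]]].
have [k Hk] := fin_all_exists Hv.
exists (\row_i (\sum_(j < m | k j == i) c j)).
rewrite /Lc (partition_big k xpredT) //=; apply: eq_bigr => i _.
rewrite mxE scaler_suml; apply: eq_bigr => j /eqP <-.
by rewrite Hk.
Qed.

Lemma horner_mx_sum (F : fieldType) n (N : 'M[F]_n.+1) (p : {poly F}) :
  horner_mx N p = \sum_(i < size p) p`_i *: N ^+ i.
Proof.
rewrite -{1}[p]coefK poly_def rmorph_sum; apply: eq_bigr => i _.
rewrite -mul_polyC rmorphM /= horner_mx_C rmorphXn /= horner_mx_X -mul_scalar_mx.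
by [].
Qed.

Lemma surj_inj (F : fieldType) (W : lmodType F) (g : W -> W) :
  finite_dim W -> (forall c u v, g (c *: u + v) = c *: g u + g v) ->
  (forall w, exists v, g v = w) -> injective g.
Proof.
move=> [n [u Hu]] Hg Hs.
suff K : forall w, g w = 0 -> w = 0.
  move=> x y Hxy; apply/eqP; rewrite -subr_eq0; apply/eqP/K.
  by rewrite fsub // Hxy subrr.
have HL : forall w, exists d, w = Lc u d by move=> w; apply: span_coord.
case: n u Hu HL => [|n] u Hu HL w gw.
  by have [d ->] := HL w; rewrite /Lc big_ord0.
have [D HD] := fin_all_exists (fun i => HL (g (u i))).
pose N := \matrix_(i, j) D i 0 j.
have HgL : forall c, g (Lc u c) = Lc u (c *m N).
  move=> c; rewrite {1}/Lc fsum // mulmx_sum_row.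
  rewrite (@fsum _ _ _ (Lc u)); last by move=> *; apply: Lc_lin.
  apply: eq_bigr => i _; congr (_ *: _); rewrite HD; congr (Lc u _).
  by apply/rowP => j; rewrite !mxE.
pose G k := iter k g.
have HG : forall k c, G k (Lc u c) = Lc u (c *m N ^+ k).
  elim=> [|k IH] c; first by rewrite expr0 mulmx1.
  by rewrite /G iterS -/(G k) IH HgL exprSr mulmxA.
pose p := char_poly N.
have Hsz : size p = n.+2 by rewrite size_char_poly.
have HP : forall v, \sum_(i < size p) p`_i *: G i v = 0.
  move=> v; have [c ->] := HL v.
  under eq_bigr do rewrite HG.
  rewrite -(@fsum _ _ _ (Lc u)); last by move=> *; apply: Lc_lin.
  have -> : \sum_(i < size p) p`_i *: (c *m N ^+ i) = c *m horner_mx N p.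
    rewrite horner_mx_sum mulmx_sumr.
    by apply: eq_bigr => i _; rewrite scalemxAr.
  rewrite Cayley_Hamilton mulmx0.
  apply: f0; exact: Lc_lin.
have exP : exists i, p`_i != 0.
  exists n.+1; have := char_poly_monic N; rewrite monicE /lead_coef Hsz /=.
  by move/eqP => ->; apply: oner_neq0.
case: (@ex_minnP (fun i => p`_i != 0) exP) => k Hk Hmin.
have Hkle : (k < size p)%N.
  rewrite Hsz ltnS; apply: Hmin; have := char_poly_monic N.
  rewrite monicE /lead_coef Hsz /= => /eqP ->; exact: oner_neq0.
have HGs : forall k w, exists v, G k v = w.
  elim=> [|j IH] w'; first by exists w'.
  have [v1 <-] := Hs w'; have [v2 <-] := IH v1.
  by exists v2; rewrite /G iterS.
have [v Hv] := HGs k w.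
have G0 : forall j, G j 0 = 0.
  elim=> [|j IH]; first by []. rewrite /G iterS -/(G j) IH; apply: f0; exact: Hg.
have := HP v; rewrite (bigD1 (Ordinal Hkle)) //= big1.
  rewrite addr0 Hv => /eqP; rewrite scaler_eq0 (negbTE Hk) /= => /eqP //.
move=> i /eqP Hi.
have [lt|ge] := ltnP i k.
  have : p`_i == 0.
    apply: contraT => Hnz; have := Hmin i Hnz; by rewrite leqNgt lt.
  by move/eqP ->; rewrite scale0r.
have Hik : (k < i)%N.
  rewrite ltn_neqAle ge andbT; apply/eqP => E; apply: Hi; apply: val_inj => /=.
  by rewrite E.
rewrite /G -(subnK ge) iterD -/(G k) -/(G (i - k)%N) Hv.
case E : (i - k)%N => [|j]; first by move: Hik; rewrite -subn_gt0 E.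
by rewrite /G iterSr gw -/(G j) G0 scaler0.
Qed.

Theorem corollary3p5 (F : fieldType) (A : algType F) (V W1 : lmodType F)
  (phi : A -> V -> V) (pi1 : A -> W1 -> W1) (S1 : W1 -> V) (T1 : V -> W1) :
  linear_system phi ->
  hom_dilation phi pi1 S1 T1 ->
  lin_minimal pi1 T1 ->
  (no_invariant_in_ker pi1 S1 -> equiv_to_canonical phi pi1 S1 T1) /\
  (finite_dim W1 -> rep_equiv_to_canonical phi pi1 -> no_invariant_in_ker pi1 S1).
Proof.
move=> _ [[Hpil _ Hpi1 Hpim] [[_ _] [HSl _] Hphi]] Hmin.
have HS : forall c u v, S1 (c *: u + v) = c *: S1 u + S1 v by move=> *; apply: HSl.
have HP : forall a c u v, pi1 a (c *: u + v) = c *: pi1 a u + pi1 a v.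
  by move=> a *; apply: Hpil.
pose R1 := fun w (b : A) => S1 (pi1 b w).
have R1lin : forall c u v, R1 (c *: u + v) = fun b => c *: R1 u b + R1 v b.
  by move=> c u v; apply: functional_extensionality => b; rewrite /R1 HP HS.
have key : forall n (c : 'I_n -> F) a x,
    R1 (\sum_(i < n) c i *: pi1 (a i) (T1 (x i)))
    = fun b => \sum_(i < n) c i *: alpha phi (a i) (x i) b.
  move=> n c a x; apply: functional_extensionality => b.
  rewrite /R1 (fsum _ _ (HP b)) (fsum _ _ HS); apply: eq_bigr => i _.
  by rewrite -Hpim /alpha Hphi.
have R1in : forall w, in_Wc phi (R1 w).
  move=> w; have [n [c [u [Hu ->]]]] := Hmin w.
  have : forall i, exists ax : A * V, u i = pi1 ax.1 (T1 ax.2).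
    by move=> i; have [a [x ->]] := Hu i; exists (a, x).
  case/fin_all_exists => f Hf.
  exists n, c, (fun i => (f i).1), (fun i => (f i).2).
  rewrite -key; congr R1; apply: eq_bigr => i _; by rewrite Hf.
have R1surj : forall f, in_Wc phi f -> exists w, R1 w = f.
  move=> f [n [c [a [x ->]]]].
  by exists (\sum_(i < n) c i *: pi1 (a i) (T1 (x i))); rewrite key.
have S0 : forall b, S1 (pi1 b 0) = 0.
  by move=> b; rewrite (f0 (HP b)) (f0 HS).
split.
  move=> Hno; exists R1; split.
  - split => //.
    move=> u v E; apply/eqP; rewrite -subr_eq0; apply/eqP.
    apply: (Hno (fun w => forall b, S1 (pi1 b w) = 0)).
    + split; first exact: S0.
      by move=> c x y Hx Hy b; rewrite HP HS Hx Hy scaler0 addr0.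
    + by move=> a x Hx b; rewrite -Hpim Hx.
    + by move=> x Hx; have := Hx 1; rewrite Hpi1.
    + move=> b; rewrite (fsub _ _ (HP b)) (fsub _ _ HS).
      have := congr1 (fun f => f b) E; rewrite /R1 /= => ->; exact: subrr.
  - move=> x; apply: functional_extensionality => b.
    by rewrite /R1 /T_c /alpha -Hphi mulr1.
  - by move=> w; rewrite /S_c /R1 Hpi1.
  - move=> a w; apply: functional_extensionality => b.
    by rewrite /pi_c /R1 Hpim.
move=> Hfd [R [[Rlin Rin Rsurj Rinj] _]].
have H1 : forall w, exists w', R w' = R1 w by move=> w; apply: Rsurj.
pose g := fun w => proj1_sig (constructive_indefinite_description _ (H1 w)).
have gP : forall w, R (g w) = R1 w.
  by move=> w; rewrite /g; case: constructive_indefinite_description.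
have glin : forall c u v, g (c *: u + v) = c *: g u + g v.
  by move=> c u v; apply: Rinj; rewrite Rlin !gP R1lin.
have gsurj : forall w, exists v, g v = w.
  move=> w; have [w' Hw'] := R1surj _ (Rin w).
  by exists w'; apply: Rinj; rewrite gP.
have ginj := surj_inj Hfd glin gsurj.
move=> U Hsub Hinv Hker u Uu.
apply: ginj; apply: Rinj; rewrite !gP.
apply: functional_extensionality => b; rewrite /R1 S0.
exact: Hker _ (Hinv b u Uu).
Qed.
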